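(* Let $\bar\lambda\in(0,\infty)^k$ be a tuning parameter satisfying $\bar\lambda_j/(2g'(\|Y-X\hat\beta^{\bar\lambda}\|_2^2))=\|(XP_jM_j^{+})^\top\varepsilon\|_{q_j}^*$ for all $j$, and let $\bar\beta:=\hat\beta^{\bar\lambda}$. Then, with probability one, $$\frac1n\|X(\beta^*-\bar\beta)\|_2^2\le\min_{\beta\in\mathbb{R}^p}\Big\{\frac1n\|X(\beta^*-\beta)\|_2^2+\frac4n\sum_{j=1}^k\|(XP_jM_j^{+})^\top\varepsilon\|_{q_j}^*\,\|M_j\beta\|_{q_j}\Big\}.$$
   Context: Standing setup. Model: $Y=X\beta^*+\varepsilon$ with $Y\in\mathbb{R}^n$, $X\in\mathbb{R}^{n\times p}$, $\beta^*\in\mathbb{R}^p$, $\varepsilon\in\mathbb{R}^n$ (random). Link function $g:\mathbb{R}\to[0,\infty)$ with $g(0)=0$, $g$ continuous and strictly increasing on $[0,\infty)$, continuously differentiable on $(0,\infty)$ with strictly positive and non-increasing derivative $g'$, and such that $\alpha\mapsto g(\|\alpha\|_2^2)$ is strictly convex on $\mathbb{R}^n$. Penalty: $k\ge1$, matrices $M_1,\dots,M_k\in\mathbb{R}^{p\times p}$ with $\bigcap_{j=1}^k\mathrm{Ker}(M_j)=\{0\}$, exponents $q_j\ge1$, $\|\cdot\|_{q_j}$ the $\ell_{q_j}$-norm on $\mathbb{R}^p$, and $\|\cdot\|_{q_j}^*$ its dual norm. For $\lambda\in(0,\infty)^k$, $\hat\beta^\lambda$ denotes any element of $\arg\min_{\beta\in\mathbb{R}^p}\{g(\|Y-X\beta\|_2^2)+\sum_{j=1}^k\lambda_j\|M_j\beta\|_{q_j}\}$.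 $A^+$ denotes the Moore–Penrose pseudoinverse; $P_1,\dots,P_k\in\mathbb{R}^{p\times p}$ are fixed projection matrices with $\sum_{j=1}^kP_jM_j^+M_j=I_{p\times p}$. Noise assumption: with probability one, $Y\neq0$ and $\min_{j}\|(XP_jM_j^{+})^\top\varepsilon\|_{q_j}^*>0$. *)

(* Defs.v *)
From Stdlib Require Import Reals Lra.
Open Scope R_scope.

(* Vectors are functions nat -> R (only indices < dimension matter);
   matrices are functions nat -> nat -> R. *)
Definition vec := nat -> R.
Definition mat := nat -> nat -> R.

Fixpoint sumR (m : nat) (f : nat -> R) : R :=
  match m with O => 0 | S m' => sumR m' f + f m' end.

Definition mv (c : nat) (A : mat) (x : vec) : vec :=
  fun i => sumR c (fun j => A i j * x j).
Definition mm (c : nat) (A B : mat) : mat :=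
  fun i j => sumR c (fun l => A i l * B l j).
Definition tr (A : mat) : mat := fun i j => A j i.
Definition vsub (x y : vec) : vec := fun i => x i - y i.

Definition sqnorm (m : nat) (x : vec) : R := sumR m (fun i => x i ^ 2).
Definition dot (m : nat) (x y : vec) : R := sumR m (fun i => x i * y i).

(* a^b for a >= 0, with 0^b = 0 (b > 0 in all uses) *)
Definition rpow (a b : R) : R := if Req_EM_T a 0 then 0 else Rpower a b.

Definition lqnorm (q : R) (m : nat) (x : vec) : R :=
  rpow (sumR m (fun i => rpow (Rabs (x i)) q)) (1 / q).

Definition is_dualnorm (q : R) (m : nat) (u : vec) (d : R) : Prop :=
  is_lub (fun t => exists v : vec, lqnorm q m v <= 1 /\ t = dot m u v) d.

Definition meq (m c : nat) (A B : mat) : Prop :=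
  forall i j, (i < m)%nat -> (j < c)%nat -> A i j = B i j.
Definition veq (m : nat) (x y : vec) : Prop := forall i, (i < m)%nat -> x i = y i.

Definition idmat : mat := fun i j => if Nat.eqb i j then 1 else 0.

Definition is_pinv (p : nat) (A B : mat) : Prop :=
  meq p p (mm p (mm p A B) A) A /\
  meq p p (mm p (mm p B A) B) B /\
  meq p p (tr (mm p A B)) (mm p A B) /\
  meq p p (tr (mm p B A)) (mm p B A).

Definition is_projection (p : nat) (P : mat) : Prop := meq p p (mm p P P) P.

Definition link_function (n : nat) (g gp : R -> R) : Prop :=
  g 0 = 0 /\
  (forall x, 0 <= g x) /\
  (forall x, 0 <= x -> forall eps, eps > 0 -> exists delta, delta > 0 /\
      forall y, 0 <= y -> Rabs (y - x) < delta -> Rabs (g y - g x) < eps) /\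
  (forall x y, 0 <= x -> x < y -> g x < g y) /\
  (forall x, 0 < x -> derivable_pt_lim g x (gp x)) /\
  (forall x, 0 < x -> forall eps, eps > 0 -> exists delta, delta > 0 /\
      forall y, 0 < y -> Rabs (y - x) < delta -> Rabs (gp y - gp x) < eps) /\
  (forall x, 0 < x -> 0 < gp x) /\
  (forall x y, 0 < x -> x <= y -> gp y <= gp x) /\
  (forall a b : vec, ~ veq n a b -> forall t, 0 < t < 1 ->
     g (sqnorm n (fun i => t * a i + (1 - t) * b i))
       < t * g (sqnorm n a) + (1 - t) * g (sqnorm n b)).

Definition objective (n p k : nat) (g : R -> R) (X : mat) (Y : vec)
  (M : nat -> mat) (q : nat -> R) (lam : nat -> R) (b : vec) : R :=
  g (sqnorm n (vsub Y (mv p X b))) + sumR k (fun j => lam j * lqnorm (q j) p (mv p (M j) b)).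

Definition noisevec (n p : nat) (X P Mp : mat) (eps : vec) : vec :=
  mv n (tr (mm p (mm p X P) Mp)) eps.

(* Main.v *)
Require Import Defs.
From Stdlib Require Import Reals Lra Lia.
Open Scope R_scope.

Lemma sumR_ext m f h : (forall i, (i < m)%nat -> f i = h i) -> sumR m f = sumR m h.
Proof. induction m; simpl; intros H; auto. rewrite IHm by (intros; apply H; lia). rewrite H by lia; auto. Qed.

Lemma sumR_plus m f h : sumR m (fun i => f i + h i) = sumR m f + sumR m h.
Proof. induction m; simpl; [lra|]. rewrite IHm; lra. Qed.

Lemma sumR_minus m f h : sumR m (fun i => f i - h i) = sumR m f - sumR m h.
Proof. induction m; simpl; [lra|]. rewrite IHm; lra. Qed.

Lemma sumR_scal m c f : sumR m (fun i => c * f i) = c * sumR m f.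
Proof. induction m; simpl; [lra|]. rewrite IHm; lra. Qed.

Lemma sumR_scalr m c f : sumR m (fun i => f i * c) = sumR m f * c.
Proof. induction m; simpl; [lra|]. rewrite IHm; lra. Qed.

Lemma sumR_le m f h : (forall i, (i < m)%nat -> f i <= h i) -> sumR m f <= sumR m h.
Proof. induction m; simpl; intros H; [lra|]. pose proof (IHm (fun i Hi => H i ltac:(lia))). pose proof (H m ltac:(lia)). lra. Qed.

Lemma sumR_nonneg m f : (forall i, (i < m)%nat -> 0 <= f i) -> 0 <= sumR m f.
Proof. intros H. replace 0 with (sumR m (fun _ => 0)). apply sumR_le; auto.
 clear H; induction m; simpl; auto; rewrite IHm; lra. Qed.

Lemma sumR_zero m f : (forall i, (i < m)%nat -> 0 <= f i) -> sumR m f = 0 ->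
  forall i, (i < m)%nat -> f i = 0.
Proof. induction m; simpl; intros H Hs i Hi; [lia|].
 pose proof (sumR_nonneg m f (fun j Hj => H j ltac:(lia))). pose proof (H m ltac:(lia)).
 destruct (Nat.eq_dec i m). subst; lra.
 apply IHm; [intros; apply H; lia | lra | lia]. Qed.

Lemma sumR_exch m l (f : nat -> nat -> R) :
  sumR m (fun i => sumR l (fun j => f i j)) = sumR l (fun j => sumR m (fun i => f i j)).
Proof. induction m; simpl.
 - induction l; simpl; auto. rewrite <- IHl; lra.
 - rewrite IHm. rewrite <- sumR_plus. auto. Qed.

Lemma mv_mm c c' A B x i : mv c (mm c' A B) x i = mv c' A (mv c B x) i.
Proof. unfold mv, mm.
 transitivity (sumR c (fun j => sumR c' (fun l => A i l * (B l j * x j)))).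
 - apply sumR_ext; intros. rewrite <- sumR_scalr. apply sumR_ext; intros; ring.
 - rewrite sumR_exch. apply sumR_ext; intros. rewrite <- sumR_scal. auto. Qed.

Lemma mv_ext c A x y i : veq c x y -> mv c A x i = mv c A y i.
Proof. intros H; unfold mv; apply sumR_ext; intros; rewrite H; auto. Qed.

Lemma mv_sub c A x y i : mv c A (vsub x y) i = mv c A x i - mv c A y i.
Proof. unfold mv, vsub. rewrite <- sumR_minus. apply sumR_ext; intros; ring. Qed.

Lemma dot_tr n p Z e w : dot n e (mv p Z w) = dot p (mv n (tr Z) e) w.
Proof. unfold dot, mv, tr.
 transitivity (sumR n (fun i => sumR p (fun a => e i * Z i a * w a))).
 - apply sumR_ext; intros. rewrite <- sumR_scal. apply sumR_ext; intros; ring.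
 - rewrite sumR_exch. apply sumR_ext; intros. rewrite <- sumR_scalr. apply sumR_ext; intros; ring. Qed.

Lemma idmat_mv p v a : (a < p)%nat -> sumR p (fun b => idmat a b * v b) = v a.
Proof. induction p; simpl; intros H; [lia|].
 destruct (Nat.eq_dec a p).
 - subst a. unfold idmat at 2. rewrite Nat.eqb_refl.
   rewrite (sumR_ext _ _ (fun _ => 0)). 2:{ intros i Hi. unfold idmat. 
     destruct (Nat.eqb_spec p i); [lia|]. ring. }
   clear. assert (forall m, sumR m (fun _ => 0) = 0) by (induction m; simpl; auto; rewrite IHm; ring).
   rewrite H; ring.
 - rewrite IHp by lia. unfold idmat. destruct (Nat.eqb_spec a p); [lia|]. ring. Qed.

Lemma concave n g gp : link_function n g gp -> forall x y, 0 < x -> 0 <= y ->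
  g y <= g x + gp x * (y - x).
Proof.
 intros (g0 & gnn & gc & ginc & gd & gdc & gpp & gpdec & _) x y Hx Hy.
 assert (Hpos: forall x y, 0 < x -> x < y -> g y - g x <= gp x * (y - x)).
 { intros a b Ha Hab. destruct (MVT_cor2 g gp a b Hab) as (c & Hc & Hc2).
   { intros c Hc. apply gd. lra. }
   rewrite Hc. apply Rmult_le_compat_r; [lra|]. apply gpdec; lra. }
 assert (Hneg: forall x y, 0 < y -> y < x -> g y <= g x + gp x * (y - x)).
 { intros a b Hb Hab. destruct (MVT_cor2 g gp b a Hab) as (c & Hc & Hc2).
   { intros c Hc. apply gd. lra. }
   assert (gp a <= gp c) by (apply gpdec; lra).
   assert (gp a * (a - b) <= gp c * (a - b)) by (apply Rmult_le_compat_r; lra). nra. }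
 destruct (Rtotal_order y x) as [Hl|[He|Hg]].
 - destruct (Rle_lt_or_eq_dec 0 y Hy) as [Hy'|Hy'].
   + apply Hneg; auto.
   + subst y. apply Rnot_lt_le. intros Hc.
     set (D := g 0 - (g x + gp x * (0 - x))).
     assert (HD : 0 < D) by (unfold D; lra).
     pose proof (gpp x Hx).
     set (y' := Rmin (x/2) (D / (2 * gp x))).
     assert (Hy1 : 0 < y') by (unfold y'; apply Rmin_glb_lt; [lra| apply Rdiv_lt_0_compat; lra]).
     assert (Hy2 : y' <= x/2) by apply Rmin_l.
     assert (Hy3 : y' <= D / (2 * gp x)) by apply Rmin_r.
     assert (gp x * y' <= gp x * (D / (2 * gp x))) by (apply Rmult_le_compat_l; lra).
     replace (gp x * (D / (2 * gp x))) with (D/2) in H0 by (field; lra).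
     pose proof (ginc 0 y' ltac:(lra) Hy1).
     pose proof (Hneg x y' Hy1 ltac:(lra)). unfold D in *. lra.
 - subst; lra.
 - pose proof (Hpos x y Hx Hg). lra.
Qed.

Lemma rpow_nonneg a b : 0 <= rpow a b.
Proof. unfold rpow, Rpower. destruct (Req_EM_T a 0); [lra|]. left; apply exp_pos. Qed.

Lemma rpow_pos a b : a <> 0 -> rpow a b = Rpower a b.
Proof. unfold rpow; destruct (Req_EM_T a 0); tauto. Qed.

Lemma Rpower_pos a b : 0 < Rpower a b.
Proof. apply exp_pos. Qed.

Lemma dual_le q m u d w : 0 < q -> is_dualnorm q m u d -> 0 <= d ->
  dot m u w <= d * lqnorm q m w.
Proof.
 intros Hq [Hub _] Hd.
 set (S := sumR m (fun i => rpow (Rabs (w i)) q)).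
 assert (HS : 0 <= S) by (apply sumR_nonneg; intros; apply rpow_nonneg).
 destruct (Rle_lt_or_eq_dec _ _ HS) as [HSp|HS0].
 - set (L := Rpower S (1/q)).
   assert (HL : lqnorm q m w = L) by (unfold lqnorm; fold S; apply rpow_pos; lra).
   assert (HLp : 0 < L) by apply Rpower_pos.
   assert (HLq : Rpower L q = S).
   { unfold L. rewrite Rpower_mult. replace (1/q*q) with 1 by (field; lra). apply Rpower_1; auto. }
   set (v := fun i => w i / L).
   assert (Hv : lqnorm q m v <= 1).
   { unfold lqnorm.
     rewrite (sumR_ext _ _ (fun i => rpow (Rabs (w i)) q * / S)).
     2:{ intros i Hi. unfold v. destruct (Req_EM_T (w i) 0) as [e|e].
         - rewrite e. unfold Rdiv. rewrite Rmult_0_l, Rabs_R0. unfold rpow.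
           destruct (Req_EM_T 0 0); [|lra]. ring.
         - rewrite !rpow_pos. 2: apply Rabs_no_R0; auto.
           2:{ unfold Rdiv. rewrite Rabs_mult. apply Rmult_integral_contrapositive; split.
               apply Rabs_no_R0; auto. apply Rabs_no_R0. apply Rinv_neq_0_compat; lra. }
           unfold Rdiv. rewrite Rabs_mult, (Rabs_pos_eq (/L)) by (left; apply Rinv_0_lt_compat; lra).
           rewrite <- Rpower_mult_distr. 2: apply Rabs_pos_lt; auto. 2: apply Rinv_0_lt_compat; lra.
           rewrite <- HLq. f_equal. unfold Rpower. rewrite ln_Rinv by lra.
           rewrite <- exp_Ropp. f_equal; ring. }
     rewrite sumR_scalr. fold S. rewrite Rinv_r by lra. rewrite rpow_pos by lra.
     unfold Rpower. rewrite ln_1, Rmult_0_r, exp_0. lra. }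
   assert (Hdv : dot m u v <= d) by (apply Hub; exists v; split; auto).
   assert (Hdv2 : dot m u v = dot m u w / L).
   { unfold dot, v, Rdiv. rewrite <- sumR_scalr. apply sumR_ext; intros; ring. }
   rewrite HL. rewrite Hdv2 in Hdv.
   apply (Rmult_le_compat_r L) in Hdv; [|lra]. unfold Rdiv in Hdv.
   rewrite Rmult_assoc, Rinv_l, Rmult_1_r in Hdv by lra. exact Hdv.
 - assert (Hz : forall i, (i < m)%nat -> w i = 0).
   { intros i Hi. pose proof (sumR_zero m _ (fun j _ => rpow_nonneg (Rabs (w j)) q) (eq_sym HS0) i Hi).
     destruct (Req_EM_T (w i) 0); auto. simpl in H. rewrite rpow_pos in H by (apply Rabs_no_R0; auto).
     pose proof (Rpower_pos (Rabs (w i)) q). lra. }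
   assert (dot m u w = 0).
   { unfold dot. rewrite (sumR_ext _ _ (fun _ => 0 * 0)). rewrite sumR_scal; ring.
     intros i Hi. rewrite Hz; auto; ring. }
   rewrite H. apply Rmult_le_pos; auto. unfold lqnorm. apply rpow_nonneg.
Qed.

Lemma lqnorm_opp q m w : lqnorm q m (fun i => - w i) = lqnorm q m w.
Proof. unfold lqnorm. f_equal. apply sumR_ext; intros. rewrite Rabs_Ropp; auto. Qed.

Lemma mv_sum c A k (f : nat -> vec) i :
  mv c A (fun a => sumR k (fun j => f j a)) i = sumR k (fun j => mv c A (f j) i).
Proof. unfold mv. rewrite <- sumR_exch. apply sumR_ext; intros. rewrite <- sumR_scal; auto. Qed.

Lemma decomp p k (M Mp P : nat -> mat) v :
  meq p p (fun a b => sumR k (fun j => mm p (mm p (P j) (Mp j)) (M j) a b)) idmat ->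
  veq p v (fun a => sumR k (fun j => mv p (mm p (mm p (P j) (Mp j)) (M j)) v a)).
Proof. intros H a Ha. unfold mv. rewrite sumR_exch.
 rewrite <- (idmat_mv p v a Ha). apply sumR_ext; intros b Hb.
 rewrite sumR_scalr. rewrite <- (H a b Ha Hb). auto. Qed.

Lemma noise_dot n p k X (M Mp P : nat -> mat) eps v :
  meq p p (fun a b => sumR k (fun j => mm p (mm p (P j) (Mp j)) (M j) a b)) idmat ->
  dot n eps (mv p X v) = sumR k (fun j => dot p (noisevec n p X (P j) (Mp j) eps) (mv p (M j) v)).
Proof. intros H. unfold noisevec. 
 transitivity (sumR k (fun j => dot n eps (mv p (mm p (mm p X (P j)) (Mp j)) (mv p (M j) v)))).
 2:{ apply sumR_ext; intros. apply dot_tr. }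
 unfold dot. 
 transitivity (sumR n (fun i => sumR k (fun j => eps i * mv p (mm p (mm p X (P j)) (Mp j)) (mv p (M j) v) i))).
 2: apply sumR_exch.
 apply sumR_ext; intros i Hi. rewrite sumR_scal. f_equal.
 rewrite (mv_ext p X _ _ i (decomp p k M Mp P v H)). rewrite mv_sum.
 apply sumR_ext; intros j Hj.
 rewrite (mv_mm p p (mm p X (P j))), (mv_mm p p X).
 apply mv_ext; intros a Ha. rewrite mv_mm, mv_mm. auto. Qed.

Lemma sq_expand n e a : sqnorm n (fun i => e i + a i) = sqnorm n e + 2 * dot n e a + sqnorm n a.
Proof. unfold sqnorm, dot. rewrite <- sumR_scal, <- !sumR_plus. apply sumR_ext; intros; ring. Qed.

Theorem mainTheorem6
  (n p k : nat) (X : mat) (betastar eps Y : vec)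
  (g gp : R -> R) (M Mp P : nat -> mat) (q : nat -> R)
  (lambar : nat -> R) (betabar : vec) (d : nat -> R)
  (HY : veq n Y (fun i => mv p X betastar i + eps i))
  (Hg : link_function n g gp)
  (Hk : (1 <= k)%nat)
  (Hker : forall b : vec,
      (forall j, (j < k)%nat -> veq p (mv p (M j) b) (fun _ => 0)) ->
      veq p b (fun _ => 0))
  (Hq : forall j, (j < k)%nat -> 1 <= q j)
  (HMp : forall j, (j < k)%nat -> is_pinv p (M j) (Mp j))
  (HP : forall j, (j < k)%nat -> is_projection p (P j))
  (HPsum : meq p p (fun a b => sumR k (fun j => mm p (mm p (P j) (Mp j)) (M j) a b)) idmat)
  (Hd : forall j, (j < k)%nat -> is_dualnorm (q j) p (noisevec n p X (P j) (Mp j) eps) (d j))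
  (HYnz : exists i, (i < n)%nat /\ Y i <> 0)
  (Hdpos : forall j, (j < k)%nat -> 0 < d j)
  (Hlam : forall j, (j < k)%nat -> 0 < lambar j)
  (Hmin : forall b : vec,
      objective n p k g X Y M q lambar betabar <= objective n p k g X Y M q lambar b)
  (Hres : 0 < sqnorm n (vsub Y (mv p X betabar)))
  (Htune : forall j, (j < k)%nat ->
      lambar j / (2 * gp (sqnorm n (vsub Y (mv p X betabar)))) = d j) :
  forall beta : vec,
    / INR n * sqnorm n (mv p X (vsub betastar betabar))
    <= / INR n * sqnorm n (mv p X (vsub betastar beta))
       + 4 / INR n * sumR k (fun j => d j * lqnorm (q j) p (mv p (M j) beta)).
Proof.
 intros beta.
 set (a := mv p X (vsub betastar betabar)).
 set (b := mv p X (vsub betastar beta)).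
 set (sbar := sqnorm n (vsub Y (mv p X betabar))) in *.
 set (sb := sqnorm n (vsub Y (mv p X beta))).
 set (N := fun j bb => lqnorm (q j) p (mv p (M j) bb)).
 set (u := fun j => noisevec n p X (P j) (Mp j) eps).
 assert (Hgp : 0 < gp sbar) by (destruct Hg as (_&_&_&_&_&_&H&_); auto).
 assert (HA : sbar - sb <= 2 * sumR k (fun j => d j * (N j beta - N j betabar))).
 { pose proof (Hmin beta) as Hm. unfold objective in Hm. fold sbar sb in Hm.
   assert (Hsb : 0 <= sb) by (apply sumR_nonneg; intros; apply pow2_ge_0).
   pose proof (concave n g gp Hg sbar sb Hres Hsb).
   assert (Hl : sumR k (fun j => lambar j * lqnorm (q j) p (mv p (M j) beta))
              - sumR k (fun j => lambar j * lqnorm (q j) p (mv p (M j) betabar))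
              = gp sbar * (2 * sumR k (fun j => d j * (N j beta - N j betabar)))).
   { rewrite <- sumR_minus, <- sumR_scal, <- sumR_scal. apply sumR_ext; intros j Hj.
     rewrite <- (Htune j Hj). unfold N. field. lra. }
   assert (gp sbar * (sbar - sb) <= gp sbar * (2 * sumR k (fun j => d j * (N j beta - N j betabar)))) by lra.
   apply Rmult_le_reg_l in H0; auto. }
 assert (Hsbar : sbar = sqnorm n (fun i => eps i + a i)).
 { unfold sbar, sqnorm. apply sumR_ext; intros i Hi. unfold vsub. rewrite HY by auto.
   unfold a. rewrite mv_sub. f_equal. ring. }
 assert (Hsb : sb = sqnorm n (fun i => eps i + b i)).
 { unfold sb, sqnorm. apply sumR_ext; intros i Hi. unfold vsub. rewrite HY by auto.
   unfold b. rewrite mv_sub. f_equal. ring. }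
 rewrite sq_expand in Hsbar, Hsb.
 assert (Hab : dot n eps a - dot n eps b = dot n eps (mv p X (vsub beta betabar))).
 { unfold dot. rewrite <- sumR_minus. apply sumR_ext; intros i Hi.
   unfold a, b. rewrite !mv_sub. ring. }
 rewrite noise_dot with (k := k) (M := M) (Mp := Mp) (P := P) in Hab by auto.
 assert (HC : 0 <= sumR k (fun j => (2 * (d j * N j beta) - d j * (N j beta - N j betabar)) +
      dot p (noisevec n p X (P j) (Mp j) eps) (mv p (M j) (vsub beta betabar)))).
 { apply sumR_nonneg; intros j Hj.
   assert (Hqj : 0 < q j) by (pose proof (Hq j Hj); lra).
   assert (Hdj : 0 <= d j) by (left; auto).
   pose proof (dual_le _ _ _ _ (mv p (M j) betabar) Hqj (Hd j Hj) Hdj) as H1.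
   pose proof (dual_le _ _ _ _ (fun i => - mv p (M j) beta i) Hqj (Hd j Hj) Hdj) as H2.
   rewrite lqnorm_opp in H2.
   assert (Hsp : dot p (noisevec n p X (P j) (Mp j) eps) (mv p (M j) (vsub beta betabar)) =
     - dot p (noisevec n p X (P j) (Mp j) eps) (fun i => - mv p (M j) beta i)
     - dot p (noisevec n p X (P j) (Mp j) eps) (mv p (M j) betabar)).
   { unfold dot. 
     rewrite (sumR_ext _ _ (fun i => (-1) * (noisevec n p X (P j) (Mp j) eps i * - mv p (M j) beta i)
        - noisevec n p X (P j) (Mp j) eps i * mv p (M j) betabar i)).
     2:{ intros; rewrite mv_sub; ring. }
     rewrite sumR_minus, sumR_scal. ring. }
   rewrite Hsp. unfold N. cbv beta. lra. }
 rewrite sumR_plus, sumR_minus, sumR_scal in HC.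
 assert (Hmain : sqnorm n a <= sqnorm n b + 4 * sumR k (fun j => d j * N j beta)) by lra.
 assert (Hn : (0 < n)%nat) by (destruct HYnz as (i & Hi & _); lia).
 assert (Hinv : 0 < / INR n) by (apply Rinv_0_lt_compat; apply lt_0_INR; auto).
 unfold N in Hmain. unfold Rdiv.
 apply (Rmult_le_compat_l (/ INR n)) in Hmain; lra.
Qed.
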